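(* Let $m,u$ be independent indeterminates over $\mathbb{Q}$ and set $q=\frac{2(u-m)}{1+m^2-u^2}$. Then $\operatorname{rank}E_{m,q}(\mathbb{Q}(m,u))\ge2$. More precisely, the points $P_{m,q}=\bigl(-\tfrac{(2m^2-1)q^2+4mq+1}{3},\,q(mq+1)^2\bigr)$ and $H_{m,q}=(x_{m,u},y_{m,u})$ with $$x_{m,u}=\frac{5m^4+(6-10u)m^3+(4u^2-6u+10)m^2+2(u^3-3u^2-5u+3)m-u^4+6u^3-6u+5}{3(m^2-u^2+1)^2},\quad y_{m,u}=\frac{2(m-u+1)^2(m^2-um+1)}{(m^2-u^2+1)^2}$$ lie in $E_{m,q}(\mathbb{Q}(m,u))$ and are linearly independent.
   Context: For $m,q$ (rational numbers or elements of a field), $E_{m,q}$ denotes the curve given by the Weierstrass equation $$y^2=x^3-\tfrac13\bigl[(m^2+1)^2q^4+4m(m^2+1)q^3+(5m^2+4)q^2+2mq+1\bigr]x+\tfrac1{27}\bigl[2(m^2+1)^2q^4+8m(m^2+1)q^3+(7m^2+8)q^2-2mq-1\bigr]\bigl[(m^2+1)q^2+2mq+2\bigr].$$ *)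

(* Defs.v *)
From HB Require Import structures.
From mathcomp Require Import all_boot all_order all_algebra.
Set Implicit Arguments. Unset Strict Implicit. Unset Printing Implicit Defensive.
Import Order.TTheory GRing.Theory Num.Theory.
Local Open Scope ring_scope.

(* Points of a short Weierstrass curve y^2 = x^3 + A x + B over a field F:
   None is the point at infinity O, Some (x, y) an affine point. *)
Definition point (F : fieldType) := option (F * F).

Definition on_curve (F : fieldType) (A B : F) (P : point F) : bool :=
  if P is Some (x, y) then y ^+ 2 == x ^+ 3 + A * x + B else true.

Definition neg_pt (F : fieldType) (P : point F) : point F :=
  if P is Some (x, y) then Some (x, - y) else None.

Definition add_pt (F : fieldType) (A : F) (P Q : point F) : point F :=
  match P, Q with
  | None, _ => Q
  | _, None => P
  | Some (x1, y1), Some (x2, y2) =>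
      if x1 == x2 then
        if y1 == - y2 then None
        else
          let l := (3 * x1 ^+ 2 + A) / (2 * y1) in
          let x3 := l ^+ 2 - x1 - x2 in
          Some (x3, l * (x1 - x3) - y1)
      else
        let l := (y2 - y1) / (x2 - x1) in
        let x3 := l ^+ 2 - x1 - x2 in
        Some (x3, l * (x1 - x3) - y1)
  end.

Definition mul_pt (F : fieldType) (A : F) (n : int) (P : point F) : point F :=
  match n with
  | Posz k => iter k (add_pt A P) None
  | Negz k => neg_pt (iter k.+1 (add_pt A P) None)
  end.

Definition EA (F : fieldType) (m q : F) : F :=
  - (3%:R)^-1 * ((m ^+ 2 + 1) ^+ 2 * q ^+ 4 + 4%:R * m * (m ^+ 2 + 1) * q ^+ 3
                 + (5%:R * m ^+ 2 + 4%:R) * q ^+ 2 + 2%:R * m * q + 1).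

Definition EB (F : fieldType) (m q : F) : F :=
  (27%:R)^-1 * ((2%:R * (m ^+ 2 + 1) ^+ 2 * q ^+ 4 + 8%:R * m * (m ^+ 2 + 1) * q ^+ 3
                 + (7%:R * m ^+ 2 + 8%:R) * q ^+ 2 - 2%:R * m * q - 1)
                * ((m ^+ 2 + 1) * q ^+ 2 + 2%:R * m * q + 2%:R)).

Definition pts_independent (F : fieldType) (A : F) (P H : point F) : Prop :=
  forall a b : int, add_pt A (mul_pt A a P) (mul_pt A b H) = None -> a = 0 /\ b = 0.

Definition Kmu := {fraction {poly {poly rat}}}.
Definition m_var : Kmu := tofrac (('X : {poly rat})%:P).
Definition u_var : Kmu := tofrac ('X : {poly {poly rat}}).

Definition q_mu : Kmu := 2%:R * (u_var - m_var) / (1 + m_var ^+ 2 - u_var ^+ 2).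

Definition P_pt (F : fieldType) (m q : F) : point F :=
  Some (- ((2%:R * m ^+ 2 - 1) * q ^+ 2 + 4%:R * m * q + 1) / 3%:R,
        q * (m * q + 1) ^+ 2).

Definition H_pt (F : fieldType) (m u : F) : point F :=
  Some ((5%:R * m ^+ 4 + (6%:R - 10%:R * u) * m ^+ 3 + (4%:R * u ^+ 2 - 6%:R * u + 10%:R) * m ^+ 2
         + 2%:R * (u ^+ 3 - 3%:R * u ^+ 2 - 5%:R * u + 3%:R) * m
         - u ^+ 4 + 6%:R * u ^+ 3 - 6%:R * u + 5%:R)
        / (3%:R * (m ^+ 2 - u ^+ 2 + 1) ^+ 2),
        2%:R * (m - u + 1) ^+ 2 * (m ^+ 2 - u * m + 1) / (m ^+ 2 - u ^+ 2 + 1) ^+ 2).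

(* Main.v *)
Require Import Defs.
From HB Require Import structures.
From mathcomp Require Import all_boot all_order all_algebra all_field.
From mathcomp Require Import ring.
Import Order.TTheory GRing.Theory Num.Theory.
Local Open Scope ring_scope.

Ltac sc := repeat (apply/andP; split); try done; rewrite ?pnatr_eq0 //.
Section Torus.
Variable c : algC.
Let F := algC.
Let h2 : 2%:R != 0 :> F. Proof. by rewrite pnatr_eq0. Qed.
Let h3 : 3%:R != 0 :> F. Proof. by rewrite pnatr_eq0. Qed.
Definition rx t := t^+2 - 2%:R/3%:R * c^+2.
Definition sy t := t * (t^+2 - c^+2).
Definition A0 := - c^+4 / 3%:R.
Definition zt t := (t + c)/(t - c).
Lemma chord_l t1 t2 : t1 + t2 != 0 -> t1 - t2 != 0 ->
  (sy t2 - sy t1)/(rx t2 - rx t1) = (t1^+2 + t1*t2 + t2^+2 - c^+2)/(t1+t2).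
Proof.
move=> hp hm.
have -> : rx t2 - rx t1 = (t2 - t1) * (t1 + t2) by rewrite /rx; ring.
have -> : sy t2 - sy t1 = (t2 - t1) * (t1^+2 + t1*t2 + t2^+2 - c^+2) by rewrite /sy; ring.
have hm' : t2 - t1 != 0 by rewrite -oppr_eq0 opprB.
field; sc.
Qed.
Lemma chord_res t1 t2 : t1 + t2 != 0 -> t1 - t2 != 0 ->
  let l := (sy t2 - sy t1)/(rx t2 - rx t1) in
  let x3 := l^+2 - rx t1 - rx t2 in
  let t3 := (t1*t2 + c^+2)/(t1+t2) in
  x3 = rx t3 /\ l * (rx t1 - x3) - sy t1 = sy t3.
Proof.
move=> hp hm l x3 t3.
have hl : l = (t1^+2 + t1*t2 + t2^+2 - c^+2)/(t1+t2) by apply: chord_l.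
have hx : x3 = rx t3 by rewrite /x3 hl /rx /t3; field; sc.
split => //; rewrite hx hl /rx /sy /t3. field; sc.
Qed.
Lemma dbl_res t : t != 0 -> t^+2 - c^+2 != 0 ->
  let l := (3%:R * (rx t)^+2 + A0)/(2%:R * sy t) in
  let x3 := l^+2 - rx t - rx t in
  let t3 := (t^+2 + c^+2)/(2%:R * t) in
  x3 = rx t3 /\ l * (rx t - x3) - sy t = sy t3.
Proof.
move=> h0 h1 l x3 t3.
have hl : l = (3%:R * t^+2 - c^+2) / (2%:R * t).
  by rewrite /l /rx /sy /A0; field; sc.
have hx : x3 = rx t3 by rewrite /x3 hl /rx /t3; field; sc.
split => //; rewrite hx hl /rx /sy /t3. field; sc.
Qed.
Lemma zt_mul t1 t2 : t1 + t2 != 0 -> t1 - c != 0 -> t2 - c != 0 ->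
  zt ((t1*t2 + c^+2)/(t1+t2)) = zt t1 * zt t2.
Proof.
move=> hp h1 h2'.
have e : t1 * t2 + c^+2 - c * (t1 + t2) = (t1 - c) * (t2 - c) by ring.
rewrite /zt.
have -> : (t1 * t2 + c ^+ 2) / (t1 + t2) - c = (t1 - c) * (t2 - c) / (t1 + t2).
  by rewrite -e; field.
have -> : (t1 * t2 + c ^+ 2) / (t1 + t2) + c = (t1 + c) * (t2 + c) / (t1 + t2).
  by field.
field; sc.
Qed.
Lemma zt_dbl t : t != 0 -> t - c != 0 ->
  zt ((t^+2 + c^+2)/(2%:R * t)) = zt t ^+ 2.
Proof.
move=> h0 h1.
have hp : t + t != 0 by rewrite -mulr2n -mulr_natl mulf_neq0.
have E := @zt_mul t t hp h1 h1. rewrite [RHS]expr2 -E; congr zt.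
by field; sc.
Qed.
Lemma zt_neg t : t + c != 0 -> t - c != 0 -> zt (- t) = (zt t)^-1.
Proof. move=> h1 h2'. rewrite /zt. field; sc; by rewrite -opprD oppr_eq0. Qed.
Lemma t3_nz t1 t2 : t1 + t2 != 0 -> t1^+2 - c^+2 != 0 -> t2^+2 - c^+2 != 0 ->
  ((t1*t2 + c^+2)/(t1+t2))^+2 - c^+2 != 0.
Proof.
move=> hp h1 h2'.
have -> : ((t1*t2 + c^+2)/(t1+t2))^+2 - c^+2 = (t1^+2 - c^+2) * (t2^+2 - c^+2) / (t1+t2)^+2.
  by field.
by rewrite !mulf_neq0 // invr_eq0 expf_neq0.
Qed.
Lemma t3d_nz t : t != 0 -> t^+2 - c^+2 != 0 ->
  ((t^+2 + c^+2)/(2%:R * t))^+2 - c^+2 != 0.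
Proof.
move=> h0 h1.
have -> : ((t^+2 + c^+2)/(2%:R * t))^+2 - c^+2 = (t^+2 - c^+2)^+2 / (2%:R * t)^+2.
  by field; sc.
by rewrite !mulf_neq0 // ?invr_eq0 expf_neq0 // mulf_neq0.
Qed.
Lemma rx_neg t : rx (- t) = rx t. Proof. by rewrite /rx sqrrN. Qed.
Lemma sy_neg t : sy (- t) = - sy t. Proof. by rewrite /sy sqrrN mulNr. Qed.
End Torus.

Notation R0 := {poly {poly rat}}.
Definition cfu1 : commr_rmorph (ratr : rat -> algC) 'i.
Proof. by move=> a; exact: mulrC. Qed.
Definition evc : {rmorphism {poly rat} -> algC} := horner_morph cfu1.
Definition ui : algC := - 'i / 3%:R.
Definition cfu2 : commr_rmorph evc ui.
Proof. by move=> a; exact: mulrC. Qed.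
Definition evp : {rmorphism R0 -> algC} := horner_morph cfu2.

Definition red (x : Kmu) (r : algC) :=
  exists n d : R0, [/\ evp d != 0, x = tofrac n / tofrac d & r = evp n / evp d].

Lemma tofrac_nz (d : R0) : evp d != 0 -> tofrac d != 0 :> Kmu.
Proof. move=> hd; rewrite tofrac_eq0; by apply: contraNneq hd => ->; rewrite rmorph0. Qed.

Lemma red_uniq x r r' : red x r -> red x r' -> r = r'.
Proof.
case=> n [d [hd -> ->]] [n' [d' [hd' e ->]]].
move/eqP: e; rewrite eqr_div ?tofrac_nz // -!tofracM tofrac_eq => /eqP e.
by apply/eqP; rewrite eqr_div // -!rmorphM e.
Qed.

Arguments red_uniq {x r r'}.
Lemma red_of (p : R0) : red (tofrac p) (evp p).
Proof.
exists p, 1; split; first by rewrite rmorph1 oner_neq0.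
  by rewrite tofrac1 divr1.
by rewrite rmorph1 divr1.
Qed.

Lemma redD x y r s : red x r -> red y s -> red (x + y) (r + s).
Proof.
case=> n [d [hd -> ->]] [n' [d' [hd' -> ->]]].
exists (n * d' + n' * d), (d * d'); split.
- by rewrite rmorphM mulf_neq0.
- by rewrite tofracD !tofracM addf_div ?tofrac_nz.
- by rewrite rmorphD !rmorphM addf_div.
Qed.

Lemma redN x r : red x r -> red (- x) (- r).
Proof.
case=> n [d [hd -> ->]]; exists (- n), d; split => //.
- by rewrite tofracN mulNr.
- by rewrite rmorphN mulNr.
Qed.

Lemma redB x y r s : red x r -> red y s -> red (x - y) (r - s).
Proof. by move=> hx hy; apply: redD => //; apply: redN. Qed.

Lemma redM x y r s : red x r -> red y s -> red (x * y) (r * s).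
Proof.
case=> n [d [hd -> ->]] [n' [d' [hd' -> ->]]].
exists (n * n'), (d * d'); split.
- by rewrite rmorphM mulf_neq0.
- by rewrite !tofracM mulf_div.
- by rewrite !rmorphM mulf_div.
Qed.

Lemma redV x r : red x r -> r != 0 -> red (x^-1) (r^-1).
Proof.
case=> n [d [hd -> ->]] hr.
have hn : evp n != 0 by apply: contraNneq hr => ->; rewrite mul0r.
exists d, n; split => //; by rewrite invf_div.
Qed.

Lemma red_div x y r s : red x r -> red y s -> s != 0 -> red (x / y) (r / s).
Proof. by move=> hx hy hs; apply: redM => //; apply: redV. Qed.

Lemma red1 : red 1 1.
Proof. by have := red_of 1; rewrite tofrac1 rmorph1. Qed.

Lemma red_nat k : red k%:R k%:R.
Proof. by have := red_of k%:R; rewrite !rmorph_nat. Qed.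

Lemma redX x r k : red x r -> red (x ^+ k) (r ^+ k).
Proof.
move=> hx; elim: k => [|k IH]; first by rewrite !expr0; exact: red1.
by rewrite !exprS; apply: redM.
Qed.

Lemma red_natV k : (0 < k)%N -> red (k%:R^-1) (k%:R^-1).
Proof. by move=> hk; apply: redV; [exact: red_nat | rewrite pnatr_eq0 -lt0n]. Qed.

Lemma red_nz x r : red x r -> r != 0 -> x != 0.
Proof.
move=> hx hr; apply: contraNneq hr => e; rewrite e in hx.
have h0 : red 0 0 by have := red_nat 0.
by rewrite (red_uniq hx h0).
Qed.

Lemma red_eq x r r' : red x r -> r = r' -> red x r'.
Proof. by move=> h <-. Qed.

Ltac redt := repeat match goal with
  | H : red ?x _ |- red ?x _ => exact H
  | |- red (_ + _) _ => eapply redD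
  | |- red (- _) _ => eapply redN
  | |- red (_ * _) _ => eapply redM
  | |- red (_ ^+ _) _ => eapply redX
  | |- red ((_ %:R)^-1) _ => eapply red_natV; reflexivity
  | |- red (_ %:R) _ => eapply red_nat
  | |- red 1 _ => eapply red1
  | H : red ?x _ |- red ?x _ => exact H
  end.

Lemma red_m : red m_var 'i.
Proof.
have := red_of ('X%:P).
rewrite (_ : evp ('X%:P) = evc 'X); last exact: horner_morphC.
by rewrite (_ : evc 'X = 'i) //; exact: horner_morphX.
Qed.

Lemma red_u : red u_var ui.
Proof. by have := red_of 'X; rewrite (_ : evp 'X = ui) //; exact: horner_morphX. Qed.

Lemma sqi : 'i ^+ 2 = -1 :> algC.
Proof. exact: sqrCi. Qed.

Lemma den_val : 1 + 'i ^+ 2 - ui ^+ 2 = 9%:R^-1.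
Proof. rewrite /ui. field: sqi. by rewrite ?pnatr_eq0. Qed.

Definition qb : algC := - 24%:R * 'i.

Lemma red_q : red q_mu qb.
Proof.
have hm := red_m; have hu := red_u.
have hd : red (1 + m_var ^+ 2 - u_var ^+ 2) (9%:R^-1).
  by apply: red_eq; [redt | exact: den_val].
rewrite /q_mu; apply: red_eq.
  apply: red_div; [redt | exact: hd | by rewrite invr_eq0 pnatr_eq0].
rewrite /qb /ui. field: sqi. by rewrite ?pnatr_eq0 ?neq0Ci.
Qed.

Definition cc : algC := 5%:R * 'i.
Definition AK := EA m_var q_mu.

Lemma redA : red AK (A0 cc).
Proof.
have hm := red_m; have hq := red_q.
rewrite /AK /EA; apply: red_eq; first by redt.
rewrite /A0 /cc /qb. field: sqi. by rewrite ?pnatr_eq0.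
Qed.

Definition redpt (X : point Kmu) (t : algC) :=
  exists x y, [/\ X = Some (x, y), red x (rx cc t), red y (sy cc t) & t^+2 - cc^+2 != 0].

Lemma sub_nz (a b : algC) : a^+2 - b^+2 != 0 -> (a - b != 0) && (a + b != 0).
Proof.
move=> h; have e : a^+2 - b^+2 = (a - b) * (a + b) by ring.
by move: h; rewrite e mulf_eq0 negb_or.
Qed.

Lemma add_chord X Y t1 t2 : redpt X t1 -> redpt Y t2 -> t1 + t2 != 0 -> t1 - t2 != 0 ->
  redpt (add_pt AK X Y) ((t1*t2 + cc^+2)/(t1+t2)).
Proof.
case=> x1 [y1 [-> hx1 hy1 hn1]] [x2 [y2 [-> hx2 hy2 hn2]]] hp hm.
have hr : rx cc t2 - rx cc t1 != 0.
  have -> : rx cc t2 - rx cc t1 = (t2 - t1) * (t1 + t2) by rewrite /rx; ring.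
  by rewrite mulf_neq0 // -oppr_eq0 opprB.
have hx : x1 != x2.
  apply: contra hr => /eqP e; rewrite e in hx1.
  by rewrite (red_uniq hx1 hx2) subrr.
rewrite /= (negbTE hx).
have [E1 E2] := @chord_res cc t1 t2 hp hm.
have hl : red ((y2 - y1) / (x2 - x1)) ((sy cc t2 - sy cc t1)/(rx cc t2 - rx cc t1)).
  by apply: red_div => //; apply: redB.
eexists; eexists; split; first reflexivity.
- by apply: red_eq; [redt | exact: E1].
- apply: red_eq; first by redt.
  by rewrite -E2 E1.
- exact: t3_nz.
Qed.

Lemma add_dbl X t : redpt X t -> t != 0 ->
  redpt (add_pt AK X X) ((t^+2 + cc^+2)/(2%:R * t)).
Proof.
case=> x1 [y1 [-> hx1 hy1 hn1]] h0.
have hs : sy cc t != 0 by rewrite /sy mulf_neq0.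
have hy : (y1 == - y1) = false.
  apply/negbTE; apply: contra hs => /eqP e.
  have hy2 : red (- y1) (- sy cc t) by apply: redN.
  rewrite -e in hy2; have := red_uniq hy1 hy2.
  move/eqP; rewrite -subr_eq0 opprK -mulr2n -mulr_natl mulf_eq0 pnatr_eq0 /=.
  by move/eqP => ->.
rewrite /= eqxx hy.
have [E1 E2] := @dbl_res cc t h0 hn1.
have hA := redA.
have hl : red ((3 * x1 ^+ 2 + AK) / (2 * y1)) ((3%:R * (rx cc t)^+2 + A0 cc)/(2%:R * sy cc t)).
  by apply: red_div; [redt | redt | rewrite mulf_neq0 ?pnatr_eq0].
eexists; eexists; split; first reflexivity.
- by apply: red_eq; [redt | exact: E1].
- apply: red_eq; first by redt.
  by rewrite -E2 E1.
- exact: t3d_nz.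
Qed.

Lemma neg_red X t : redpt X t -> redpt (neg_pt X) (- t).
Proof.
case=> x1 [y1 [-> hx1 hy1 hn1]].
exists x1, (- y1); split => //.
- by rewrite rx_neg.
- by rewrite sy_neg; apply: redN.
- by rewrite sqrrN.
Qed.

Section OnCurve.
Variable F : fieldType.
Hypothesis h3 : 3%:R != 0 :> F.
Let h27 : 27%:R != 0 :> F.
Proof. by rewrite (_ : 27 = 3 * 3 * 3)%N // !natrM !mulf_neq0. Qed.

Lemma onP (m q : F) : on_curve (EA m q) (EB m q) (P_pt m q).
Proof. apply/eqP; rewrite /EA /EB /P_pt /=. field. by rewrite h3 h27. Qed.

Definition ah (m w d : F) := - (3%:R)^-1 * ((m ^+ 2 + 1) ^+ 2 * w ^+ 4 + 4%:R * m * (m ^+ 2 + 1) * w ^+ 3 * d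
                 + (5%:R * m ^+ 2 + 4%:R) * w ^+ 2 * d^+2 + 2%:R * m * w * d^+3 + d^+4).
Definition bh (m w d : F) :=
  (27%:R)^-1 * ((2%:R * (m ^+ 2 + 1) ^+ 2 * w ^+ 4 + 8%:R * m * (m ^+ 2 + 1) * w ^+ 3 * d
                 + (7%:R * m ^+ 2 + 8%:R) * w ^+ 2 * d^+2 - 2%:R * m * w * d^+3 - d^+4)
                * ((m ^+ 2 + 1) * w ^+ 2 + 2%:R * m * w * d + 2%:R * d^+2)).
Lemma keyH (m w d X Y : F) (hd : d != 0) :
  (Y / d^+2)^+2 - ((X / (3%:R * d^+2))^+3 + EA m (w/d) * (X / (3%:R * d^+2)) + EB m (w/d))
  = (Y^+2 * d^+2 - ( X^+3 / 27%:R + ah m w d * X / 3%:R + bh m w d)) / d^+6.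
Proof. rewrite /EA /EB /ah /bh. field. by rewrite hd h3 h27. Qed.

Lemma polyH (m u d w X Y ah' bh' : F) :
  d = 1 + m^+2 - u^+2 -> w = 2%:R * (u - m) ->
  X = (5%:R * m ^+ 4 + (6%:R - 10%:R * u) * m ^+ 3 + (4%:R * u ^+ 2 - 6%:R * u + 10%:R) * m ^+ 2
         + 2%:R * (u ^+ 3 - 3%:R * u ^+ 2 - 5%:R * u + 3%:R) * m
         - u ^+ 4 + 6%:R * u ^+ 3 - 6%:R * u + 5%:R) ->
  Y = 2%:R * (m - u + 1) ^+ 2 * (m ^+ 2 - u * m + 1) ->
  ah' = ((m ^+ 2 + 1) ^+ 2 * w ^+ 4 + 4%:R * m * (m ^+ 2 + 1) * w ^+ 3 * d
                 + (5%:R * m ^+ 2 + 4%:R) * w ^+ 2 * d^+2 + 2%:R * m * w * d^+3 + d^+4) ->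
  bh' = ((2%:R * (m ^+ 2 + 1) ^+ 2 * w ^+ 4 + 8%:R * m * (m ^+ 2 + 1) * w ^+ 3 * d
                 + (7%:R * m ^+ 2 + 8%:R) * w ^+ 2 * d^+2 - 2%:R * m * w * d^+3 - d^+4)
                * ((m ^+ 2 + 1) * w ^+ 2 + 2%:R * m * w * d + 2%:R * d^+2)) ->
  27%:R * Y^+2 * d^+2 - X^+3 + 3%:R * ah' * X - bh' = 0.
Proof. move=> -> -> -> -> -> ->. ring. Qed.

Lemma onH (m u : F) (hd : 1 + m^+2 - u^+2 != 0) :
  on_curve (EA m (2%:R * (u - m) / (1 + m ^+ 2 - u ^+ 2)))
           (EB m (2%:R * (u - m) / (1 + m ^+ 2 - u ^+ 2))) (H_pt m u).
Proof.
apply/eqP; apply: subr0_eq; rewrite /H_pt /=.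
set d := 1 + m^+2 - u^+2.
have -> : m ^+ 2 - u ^+ 2 + 1 = d by rewrite /d; ring.
set X := (5%:R * m ^+ 4 + (6%:R - 10%:R * u) * m ^+ 3 + (4%:R * u ^+ 2 - 6%:R * u + 10%:R) * m ^+ 2
         + 2%:R * (u ^+ 3 - 3%:R * u ^+ 2 - 5%:R * u + 3%:R) * m
         - u ^+ 4 + 6%:R * u ^+ 3 - 6%:R * u + 5%:R).
set Y := 2%:R * (m - u + 1) ^+ 2 * (m ^+ 2 - u * m + 1).
rewrite (@keyH m (2%:R * (u - m)) d X Y hd).
set ah' := ((m ^+ 2 + 1) ^+ 2 * (2%:R * (u - m)) ^+ 4 + 4%:R * m * (m ^+ 2 + 1) * (2%:R * (u - m)) ^+ 3 * d
                 + (5%:R * m ^+ 2 + 4%:R) * (2%:R * (u - m)) ^+ 2 * d^+2 + 2%:R * m * (2%:R * (u - m)) * d^+3 + d^+4).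
set bh' := ((2%:R * (m ^+ 2 + 1) ^+ 2 * (2%:R * (u - m)) ^+ 4 + 8%:R * m * (m ^+ 2 + 1) * (2%:R * (u - m)) ^+ 3 * d
                 + (7%:R * m ^+ 2 + 8%:R) * (2%:R * (u - m)) ^+ 2 * d^+2 - 2%:R * m * (2%:R * (u - m)) * d^+3 - d^+4)
                * ((m ^+ 2 + 1) * (2%:R * (u - m)) ^+ 2 + 2%:R * m * (2%:R * (u - m)) * d + 2%:R * d^+2)).
have E : Y ^+ 2 * d ^+ 2 - (X ^+ 3 / 27%:R + ah m (2%:R * (u - m)) d * X / 3%:R + bh m (2%:R * (u - m)) d)
   = (27%:R * Y^+2 * d^+2 - X^+3 + 3%:R * ah' * X - bh') / 27%:R.
  rewrite /ah /bh /ah' /bh'. field. by rewrite h3 h27.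
rewrite E (@polyH m u d (2%:R * (u - m)) X Y ah' bh') //.
by rewrite !mul0r.
Qed.
End OnCurve.

Lemma redpt_nz {X t} : redpt X t -> (t - cc != 0) && (t + cc != 0).
Proof. by case=> x [y [_ _ _ h]]; apply: sub_nz. Qed.

Lemma zt_nz {t} : (t - cc != 0) && (t + cc != 0) -> zt cc t != 0.
Proof. by case/andP=> h1 h2; rewrite /zt mulf_neq0 ?invr_eq0. Qed.

Lemma zt0 : zt cc 0 = -1.
Proof.
have hc : cc != 0 by rewrite /cc mulf_neq0 ?pnatr_eq0 ?neq0Ci.
by rewrite /zt add0r sub0r invrN mulrN divff.
Qed.

Lemma iter_red {P t} : redpt P t -> (forall n, (0 < n)%N -> zt cc t ^+ n != 1) ->
  forall k, exists t', redpt (iter k.+1 (add_pt AK P) None) t' /\ zt cc t' = zt cc t ^+ k.+1.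
Proof.
move=> hP hn.
have hP' := hP; case: hP' => x [y [eP _ _ _]].
have hnz := redpt_nz hP; have hz0 := zt_nz hnz.
have it1 : iter 1 (add_pt AK P) None = P by rewrite /= eP.
elim=> [|k IH]; first by exists t; rewrite it1 expr1.
case: k IH => [|k] [t' [hr hz]].
- have t0 : t != 0.
    apply: contra (hn 2%N isT) => /eqP ->; by rewrite zt0 sqrrN expr1n.
  have -> : iter 2 (add_pt AK P) None = add_pt AK P P by rewrite iterS it1.
  exists ((t^+2 + cc^+2)/(2%:R * t)); split; first exact: add_dbl.
  by case/andP: hnz => h1 _; rewrite zt_dbl.
- have hnz' := redpt_nz hr.
  have ht1 : t - t' != 0.
    rewrite subr_eq0; apply/negP => /eqP et; rewrite -et in hz.
    have : zt cc t ^+ k.+1 == 1.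
      by rewrite -(inj_eq (mulfI hz0)) -exprS -hz mulr1.
    by rewrite (negbTE (hn k.+1 isT)).
  have ht2 : t + t' != 0.
    rewrite addr_eq0; apply/negP => /eqP et; rewrite et in hz hz0.
    case/andP: hnz' => h1 h2.
    have e2 : - t' - cc != 0 by rewrite -opprD oppr_eq0.
    have e3 : - t' + cc != 0 by rewrite addrC -opprB oppr_eq0.
    have := @zt_neg cc (- t') e3 e2. rewrite opprK hz => e.
    have : zt cc (- t') ^+ k.+3 == 1.
      by rewrite exprS e mulfV.
    by rewrite -et (negbTE (hn k.+3 isT)).
  exists ((t * t' + cc^+2)/(t + t')); split.
    by rewrite iterS; apply: add_chord.
  case/andP: hnz => h1 _; case/andP: hnz' => h1' _.
  by rewrite zt_mul // hz -exprS.
Qed.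

Lemma mul_red P t (a : int) : redpt P t -> (forall n, (0 < n)%N -> zt cc t ^+ n != 1) -> a != 0 ->
  exists t', redpt (mul_pt AK a P) t' /\ zt cc t' = zt cc t ^ a.
Proof.
move=> hP hn; case: a => [[|k]|k] // _.
- have [t' [h1 h2]] := iter_red hP hn k.
  by exists t'; split.
- have [t' [h1 h2]] := iter_red hP hn k.
  exists (- t'); split; first exact: neg_red.
  case/andP: (redpt_nz h1) => e1 e2.
  by rewrite zt_neg // h2.
Qed.

Lemma nat_pows k l k' l' : (3^k * 2^l = 3^k' * 2^l')%N -> k = k' /\ l = l'.
Proof.
move=> e.
have L3 a b : logn 3 (3^a * 2^b) = a.
  by rewrite lognM ?expn_gt0 // !lognX (_ : logn 3 3 = 1) // (_ : logn 3 2 = 0) // muln1 muln0 addn0.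
have L2 a b : logn 2 (3^a * 2^b) = b.
  by rewrite lognM ?expn_gt0 // !lognX (_ : logn 2 3 = 0) // (_ : logn 2 2 = 1) // muln1 muln0.
by split; [rewrite -(L3 k l) e L3 | rewrite -(L2 k l) e L2].
Qed.

Lemma pow32 (i j : int) : (3%:R : algC) ^ i = 2%:R ^ j -> i = 0 /\ j = 0.
Proof.
have n3 n : (3%:R : algC) ^+ n != 0 by rewrite expf_neq0 // pnatr_eq0.
have n2 n : (2%:R : algC) ^+ n != 0 by rewrite expf_neq0 // pnatr_eq0.
case: i => n; case: j => m; rewrite /exprz /=.
- rewrite -!natrX => /eqP; rewrite eqr_nat => /eqP e.
  have := @nat_pows n 0 0 m; by rewrite expn0 muln1 mul1n => /(_ e) [-> <-].
- move/(congr1 (fun z => z * 2%:R ^+ m.+1)); rewrite mulVf // -!natrX -natrM.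
  move/eqP; rewrite pnatr_eq1 => /eqP e.  
  by have := @nat_pows n m.+1 0 0; rewrite !expn0 muln1 => /(_ e) [].
- move/(congr1 (fun z => z * 3%:R ^+ n.+1)); rewrite mulVf // -!natrX -natrM.
  move/eqP; rewrite eq_sym pnatr_eq1 mulnC => /eqP e.
  by have := @nat_pows n.+1 m 0 0; rewrite !expn0 muln1 => /(_ e) [].
- move/invr_inj; rewrite -!natrX => /eqP; rewrite eqr_nat => /eqP e.
  by have := @nat_pows n.+1 0 0 m.+1; rewrite !expn0 muln1 mul1n => /(_ e) [].
Qed.

Lemma normz (x : algC) (a : int) : `|x ^ a| = `|x| ^ a.
Proof. by case: a => n /=; rewrite ?normfV normrX. Qed.

Lemma indep_num (a b : int) : (3%:R / 2%:R : algC) ^ a * (- 'i / 3%:R) ^ b = 1 -> a = 0 /\ b = 0.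
Proof.
move/(congr1 (fun z : algC => `|z|)); rewrite normr1 normrM !normz.
have -> : `|3%:R / 2%:R : algC| = 3%:R / 2%:R by rewrite ger0_norm // divr_ge0 ?ler0n.
have -> : `|- 'i / 3%:R : algC| = 3%:R^-1.
  by rewrite normrM normrN normCi mul1r normfV normr_nat.
have h3 : (3%:R : algC) != 0 by rewrite pnatr_eq0.
have h2 : (2%:R : algC) != 0 by rewrite pnatr_eq0.
rewrite expfzMl !exprz_inv mulrAC -expfzDr // => e.
have := congr1 (fun z => z * 2%:R ^ a) e.
rewrite mul1r -mulrA -expfzDr // addNr expr0z mulr1 => /pow32 [e1 ea].
split => //; rewrite ea in e1.
by move/eqP: e1; rewrite sub0r oppr_eq0 => /eqP.
Qed.

Lemma indep_core P H tp th : redpt P tp -> redpt H th ->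
  (forall a b : int, zt cc tp ^ a * zt cc th ^ b = 1 -> a = 0 /\ b = 0) ->
  pts_independent AK P H.
Proof.
move=> hP hH hind a b.
have hnP : forall n, (0 < n)%N -> zt cc tp ^+ n != 1.
  move=> n hn; apply/eqP => e.
  have := hind n 0; rewrite expr0z mulr1 -exprnP e => /(_ erefl) [en _].
  by case: en hn => ->.
have hnH : forall n, (0 < n)%N -> zt cc th ^+ n != 1.
  move=> n hn; apply/eqP => e.
  have := hind 0 n; rewrite expr0z mul1r -exprnP e => /(_ erefl) [_ en].
  by case: en hn => ->.
case: (eqVneq a 0) => [-> | ha]; case: (eqVneq b 0) => [-> | hb] //.
- have [t2 [[x [y [e _ _ _]]] _]] := @mul_red _ _ b hH hnH hb.
  by rewrite /= e.
- have [t1 [[x [y [e _ _ _]]] _]] := @mul_red _ _ a hP hnP ha.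
  by rewrite /= e.
have [t1 [[x1 [y1 [e1 hx1 hy1 hn1]]] hz1]] := @mul_red _ _ a hP hnP ha.
have [t2 [[x2 [y2 [e2 hx2 hy2 hn2]]] hz2]] := @mul_red _ _ b hH hnH hb.
rewrite e1 e2 /=.
case: ifP => hxe; last by [].
case: ifP => hye; last by [].
move=> _; move/eqP: hxe => ex; move/eqP: hye => ey.
rewrite ex in hx1; have er := red_uniq hx1 hx2.
have hy2' : red (- y2) (- sy cc t2) by apply: redN.
rewrite -ey in hy2'; have es := red_uniq hy1 hy2'.
have et : t1 = - t2.
  have eq2 : t1^+2 = t2^+2 by move: er; rewrite /rx => /addIr.
  have : (t1 - t2) * (t1 + t2) == 0.
    by rewrite (_ : (t1 - t2) * (t1 + t2) = t1^+2 - t2^+2); [rewrite eq2 subrr | ring].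
  rewrite mulf_eq0 => /orP [|]; last by rewrite addr_eq0 => /eqP.
  rewrite subr_eq0 => /eqP et; rewrite -et in es *.
  have : sy cc t1 *+ 2 == 0 by rewrite mulr2n {1}es addNr.
  rewrite -mulr_natl mulf_eq0 pnatr_eq0 /= /sy mulf_eq0 (negbTE hn1) orbF => /eqP ->.
  by rewrite oppr0.
have hz : zt cc t1 * zt cc t2 = 1.
  case/andP: (redpt_nz (X := Some (x2, y2)) (t := t2) (ex_intro _ x2 (ex_intro _ y2 (And4 erefl hx2 hy2 hn2)))) => h1 h2.
  rewrite et zt_neg // mulVf //.
  by apply: zt_nz; rewrite h1 h2.
have := hind a b; rewrite -hz1 -hz2 => /(_ hz) [ea _].
by move/eqP: ha; rewrite ea.
Qed.

Definition tP : algC := 25%:R * 'i.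
Definition tH : algC := - 3%:R - 4%:R * 'i.

Lemma nzCi (a b : nat) : (0 < a)%N -> a%:R + 'i * b%:R != 0 :> algC.
Proof.
move=> ha; apply/eqP => e.
have : (a%:R + 'i * b%:R) * (a%:R - 'i * b%:R) = (a^2 + b^2)%:R :> algC.
  by rewrite natrD !natrX; ring: sqi.
rewrite e mul0r => /eqP; rewrite eq_sym pnatr_eq0 addn_eq0 expn_eq0 /=.
by rewrite -[a == 0%N]negbK -lt0n ha.
Qed.

Ltac scC := try (repeat (apply/andP; split)); rewrite ?pnatr_eq0 ?neq0Ci //.

Lemma redP : redpt (P_pt m_var q_mu) tP.
Proof.
have hm := red_m; have hq := red_q.
eexists; eexists; split; first reflexivity.
- apply: red_eq; first by redt.
  rewrite /rx /cc /tP /qb. field: sqi. scC.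
- apply: red_eq; first by redt.
  rewrite /sy /cc /tP /qb. ring: sqi.
- have -> : tP^+2 - cc^+2 = - 600%:R by rewrite /tP /cc; ring: sqi.
  by rewrite oppr_eq0 pnatr_eq0.
Qed.

Lemma redH : redpt (H_pt m_var u_var) tH.
Proof.
have hm := red_m; have hu := red_u.
have hd0 : red (m_var^+2 - u_var^+2 + 1) (9%:R^-1).
  apply: red_eq; first by redt.
  by rewrite -den_val; ring.
have n9 : (9%:R^-1 : algC) != 0 by rewrite invr_eq0 pnatr_eq0.
have hD1 : red ((3%:R * (m_var ^+ 2 - u_var ^+ 2 + 1) ^+ 2)^-1) ((3%:R * (9%:R^-1)^+2)^-1).
  by apply: redV; [redt | rewrite mulf_neq0 ?expf_neq0 ?pnatr_eq0].
have hD2 : red (((m_var ^+ 2 - u_var ^+ 2 + 1) ^+ 2)^-1) (((9%:R^-1)^+2)^-1).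
  by apply: redV; [redt | rewrite expf_neq0].
eexists; eexists; split; first reflexivity.
- apply: red_eq; first by redt.
  rewrite /rx /cc /tH /ui. field: sqi. scC.
- apply: red_eq; first by redt.
  rewrite /sy /cc /tH /ui. field: sqi. scC.
- have -> : tH^+2 - cc^+2 = 18%:R + 'i * 24%:R by rewrite /tH /cc; ring: sqi.
  exact: nzCi.
Qed.

Lemma ztP : zt cc tP = 3%:R / 2%:R.
Proof. rewrite /zt /cc /tP. field. by rewrite -mulrBl -natrB // mulf_neq0 ?pnatr_eq0 ?neq0Ci. Qed.

Lemma ztH : zt cc tH = - 'i / 3%:R.
Proof.
have hy : tH - cc != 0.
  have -> : tH - cc = - (3%:R + 'i * 9%:R) by rewrite /tH /cc; ring.
  by rewrite oppr_eq0 nzCi.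
rewrite /zt; apply: (canLR (mulfK hy)).
rewrite /tH /cc. field: sqi. scC.
Qed.

Lemma h3K : 3%:R != 0 :> Kmu.
Proof. apply: (@red_nz _ _ (red_nat 3)); by rewrite pnatr_eq0. Qed.

Lemma hdK : 1 + m_var ^+ 2 - u_var ^+ 2 != 0.
Proof.
have hm := red_m; have hu := red_u.
apply: (@red_nz _ (9%:R^-1)); last by rewrite invr_eq0 pnatr_eq0.
apply: red_eq; first by redt.
exact: den_val.
Qed.

Theorem theorem3 :
  let A := EA m_var q_mu in
  let B := EB m_var q_mu in
  let P := P_pt m_var q_mu in
  let H := H_pt m_var u_var in
  [/\ on_curve A B P, on_curve A B H & pts_independent A P H].
Proof.
move=> A B P H; split.
- by apply: onP; exact: h3K.
- rewrite /A /B /H /q_mu; apply: onH; [exact: h3K | exact: hdK].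
- rewrite /A /P /H; apply: (@indep_core _ _ _ _ redP redH) => a b.
  rewrite ztP ztH; exact: indep_num.
Qed.
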